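(* Let $c\in\mathbb{R}$, $\beta\geq0$, $q\in(0,1)$, and let $J:\mathbb{Z}\to\mathbb{R}$ satisfy $$\sum_{i=-\infty}^0 \left(1+q^{2(i-c)}\frac{e^{\beta J(i-1)}}{e^{\beta |J(i)|}+q^2 e^{\beta |J(i-2)|}}\right)^{-1} + \sum_{i=1}^\infty \left(1+q^{-2(i-c)}\frac{e^{\beta J(i-1)}}{e^{\beta |J(i)|}+q^{-2} e^{\beta |J(i-2)|}}\right)^{-1}<\infty.$$ Then for every $n\in\mathbb{Z}$, $$\mu_{J}^c(\{N=n\}) = q^{-2nc + n(n+1)}\,\mu_{J}^c\Big(\mathbb{1}_{\{N=0\}}e^{-\beta H^{(n)}_{J}}\Big),\qquad\text{where } H_{J}^{(n)}(\sigma) = \sum_{i\in\mathbb Z} \big(J(i+n) - J(i)\big)\mathbb{1}_{\{\sigma_{i}\neq \sigma_{i+1}\}}.$$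
   Context: Spin configurations are $\sigma\in\{-1,+1\}^{\mathbb{Z}}$. Let $\mathcal{B}$ be the set of configurations for which there exist $a,b\in\mathbb{Z}$ with $\sigma_{a-i}=-1$ and $\sigma_{b+i}=+1$ for all $i\in\mathbb{N}$. The Hamiltonian is $H_J(\sigma)=\sum_{i\in\mathbb{Z}}J(i)\mathbb{1}_{\{\sigma_i\neq\sigma_{i+1}\}}$ and $f_c(\sigma)=2\sum_{i=1}^\infty(i-c)\mathbb{1}_{\{\sigma_i=-1\}}-2\sum_{i=-\infty}^0(i-c)\mathbb{1}_{\{\sigma_i=1\}}$. The probability measure $\mu^c_J$ is given by $\mu^c_J(\sigma)=e^{-\beta H_J(\sigma)}q^{f_c(\sigma)}/Z^J_{\beta,q,c}$ with $Z^J_{\beta,q,c}=\sum_\sigma e^{-\beta H_J(\sigma)}q^{f_c(\sigma)}$; under the displayed summability condition it is concentrated on $\mathcal{B}$. For $\sigma\in\mathcal{B}$ let $N_+(\sigma)=\#\{i\leq 0:\sigma_i=+1\}$, $N_-(\sigma)=\#\{i\geq1:\sigma_i=-1\}$ (both finite), and $N(\sigma)=N_-(\sigma)-N_+(\sigma)$. For a function $F$, $\mu^c_J(F)$ denotes the expectation of $F$ under $\mu^c_J$. *)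

(* Defs.v *)
From mathcomp Require Import all_boot all_order all_algebra.
From mathcomp Require Import all_classical all_reals all_analysis.
Set Implicit Arguments. Unset Strict Implicit. Unset Printing Implicit Defensive.
Import Order.TTheory GRing.Theory Num.Theory.
Local Open Scope classical_set_scope.
Local Open Scope ring_scope.

(* Spin configurations sigma in {-1,+1}^Z, encoded as int -> bool with
   true <-> +1 and false <-> -1. *)
Definition config := int -> bool.

Definition inB (s : config) : Prop :=
  exists a b : int, forall i : nat, s (a - i%:Z) = false /\ s (b + i%:Z) = true.

Definition walls (s : config) : set int := [set i | s i != s (i + 1)].

Section Model.
Variable R : realType.

Definition HJ (J : int -> R) (s : config) : R := \sum_(i \in walls s) J i.

Definition HJn (n : int) (J : int -> R) (s : config) : R :=
  \sum_(i \in walls s) (J (i + n) - J i).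

Definition fc (c : R) (s : config) : R :=
  2 * (\sum_(i \in [set i : int | 1 <= i /\ s i = false]) (i%:~R - c))
  - 2 * (\sum_(i \in [set i : int | i <= 0 /\ s i = true]) (i%:~R - c)).

Definition weight (beta q c : R) (J : int -> R) (s : config) : R :=
  expR (- beta * HJ J s) * q `^ (fc c s).

(* partition function Z^J_{beta,q,c} (mu^c_J is concentrated on B) *)
Definition Zpart (beta q c : R) (J : int -> R) : \bar R :=
  \esum_(s in inB) (weight beta q c J s)%:E.

(* expectation mu^c_J(F) of a nonnegative function F *)
Definition mu (beta q c : R) (J : int -> R) (F : config -> R) : R :=
  fine (\esum_(s in inB) (weight beta q c J s * F s)%:E) / fine (Zpart beta q c J).

End Model.

Definition Nplus (s : config) : int :=
  \sum_(i \in [set i : int | i <= 0 /\ s i = true]) (1 : int).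
Definition Nminus (s : config) : int :=
  \sum_(i \in [set i : int | 1 <= i /\ s i = false]) (1 : int).
Definition Nspin (s : config) : int := Nminus s - Nplus s.

(* Main.v *)
Require Import Defs.
From mathcomp Require Import all_boot all_order all_algebra.
From mathcomp Require Import all_classical all_reals all_analysis.
Import Order.TTheory GRing.Theory Num.Theory.
Local Open Scope classical_set_scope.
Local Open Scope ring_scope.
From mathcomp Require Import zify ring lra.

Lemma inB_bounds s : inB s -> exists a b : int,
  (forall i, i <= a -> s i = false) /\ (forall i, b <= i -> s i = true).
Proof.
move=> [a [b H]]; exists a, b; split => i hi.
  have -> : i = a - (absz (a - i))%:Z by lia.
  exact: (H _).1.
have -> : i = b + (absz (i - b))%:Z by lia.
exact: (H _).2.
Qed.

Lemma finite_intI (lo hi : int) : finite_set [set i : int | lo <= i <= hi].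
Proof.
apply: (sub_finite_set (B := (fun k : nat => lo + k%:Z) @` `I_(absz (hi - lo)).+1)).
  move=> i /andP[h1 h2]; exists (absz (i - lo)); rewrite /=; lia.
by apply: finite_image; apply: finite_II.
Qed.

Definition tshift (n : int) (s : config) : config := fun i => s (i - n).
Definition Dm (s : config) := [set i : int | 1 <= i /\ s i = false].
Definition Dp (s : config) := [set i : int | i <= 0 /\ s i = true].

Lemma finite_bounded (A : set int) lo hi :
  (forall i, A i -> lo <= i <= hi) -> finite_set A.
Proof. move=> H; apply: (sub_finite_set _ (finite_intI lo hi)) => i /H //. Qed.

Lemma Dm_fin s : inB s -> finite_set (Dm s).
Proof.
move=> /inB_bounds [a [b [Ha Hb]]]; apply: (@finite_bounded _ 1 b).
move=> i [h1 h2]; apply/andP; split => //.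
case: (lerP i b) => // /ltW /Hb; by rewrite h2.
Qed.

Lemma Dp_fin s : inB s -> finite_set (Dp s).
Proof.
move=> /inB_bounds [a [b [Ha Hb]]]; apply: (@finite_bounded _ a 0).
move=> i [h1 h2]; apply/andP; split => //.
case: (lerP a i) => // /ltW /Ha; by rewrite h2.
Qed.

Lemma walls_fin s : inB s -> finite_set (walls s).
Proof.
move=> /inB_bounds [a [b [Ha Hb]]]; apply: (@finite_bounded _ a b).
move=> i; rewrite /walls /= => h; apply/andP; split.
  case: (lerP a i) => // hi.
  by rewrite (Ha i) ?(Ha (i+1)) in h; lia.
case: (lerP i b) => // hi.
by rewrite (Hb i) ?(Hb (i+1)) in h; lia.
Qed.

Lemma tshiftB n s : inB s -> inB (tshift n s).
Proof.
move=> [a [b H]]; exists (a + n), (b + n) => i; rewrite /tshift.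
by rewrite addrAC addrK (addrAC b) addrK.
Qed.

Lemma tshiftD m n s : tshift (m + n) s = tshift m (tshift n s).
Proof. apply/funext => i; rewrite /tshift; congr s; ring. Qed.

Lemma tshift0 s : tshift 0 s = s.
Proof. apply/funext => i; by rewrite /tshift subr0. Qed.

Section Shift1.
Variable V : zmodType.

Lemma Dm_shift1 s (F : int -> V) : inB s ->
  \sum_(i \in Dm (tshift 1 s)) F i = \sum_(i \in Dm s) F (i + 1) + (if s 0 then 0 else F 1).
Proof.
move=> sB.
rewrite (reindex_fsbig (fun j => j + 1) [set j : int | 0 <= j /\ s j = false]); last first.
  split.
  - move=> x [h1 h2]; split; first lia. by rewrite /tshift addrK.
  - by move=> x y _ _ /addIr.
  - move=> y [h1 h2]; exists (y - 1); last by rewrite subrK.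
    split; first lia. by [].
case E: (s 0).
  rewrite addr0; apply: eq_fsbigl; apply/seteqP; split => x /= [h1 h2]; split => //.
  case: (eqVneq x 0) => [ex|nx]; first by move: h2; rewrite ex E.
  lia.
  lia.
rewrite (fsbigD1 0) //=; last first.
  apply: (sub_finite_set (B := 0 |` Dm s)); last by rewrite finite_setU; split => //; apply: Dm_fin.
  move=> x [h1 h2]; case: (eqVneq x 0) => [->|nx]; [by left|right; split => //; lia].
rewrite addrC; congr (_ + _); apply: eq_fsbigl; apply/seteqP; split => x /=.
  move=> [[h1 h2] /eqP h3]; split => //; lia.
move=> [h1 h2]; split; [split => //; lia| apply/eqP; lia].
Qed.

Lemma Dp_shift1 s (F : int -> V) : inB s ->
  \sum_(i \in Dp (tshift 1 s)) F i = \sum_(i \in Dp s) F (i + 1) - (if s 0 then F 1 else 0).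
Proof.
move=> sB.
rewrite (reindex_fsbig (fun j => j + 1) [set j : int | j <= -1 /\ s j = true]); last first.
  split.
  - move=> x [h1 h2]; split; first lia. by rewrite /tshift addrK.
  - by move=> x y _ _ /addIr.
  - move=> y [h1 h2]; exists (y - 1); last by rewrite subrK.
    split; first lia. by [].
case E: (s 0); last first.
  rewrite subr0; apply: eq_fsbigl; apply/seteqP; split => x /= [h1 h2]; split => //.
  lia.
  case: (eqVneq x 0) => [ex|nx]; first by move: h2; rewrite ex E.
  lia.
rewrite [in RHS](fsbigD1 0) //=; last exact: Dp_fin.
rewrite addrC addrK; apply: eq_fsbigl; apply/seteqP; split => x /=.
  move=> [h1 h2]; split; [split => //; lia| apply/eqP; lia].
move=> [[h1 h2] /eqP h3]; split => //; lia.
Qed.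
End Shift1.

Lemma Nspin_shift1 s : inB s -> Nspin (tshift 1 s) = Nspin s + 1.
Proof.
move=> sB; rewrite /Nspin /Nminus /Nplus.
have h1 := @Dm_shift1 _ s (fun _ => (1:int)) sB.
have h2 := @Dp_shift1 _ s (fun _ => (1:int)) sB.
rewrite /= /Dm /Dp in h1 h2; rewrite h1 h2.
by case: (s 0); ring.
Qed.

Lemma sum1_intr (R : realType) (A : set int) : finite_set A ->
  (\sum_(i \in A) (1:int))%:~R = \sum_(i \in A) (1:R).
Proof.
move=> Af; rewrite !fsbig_finite //.
by rewrite (big_morph (fun x : int => x%:~R : R) (@intrD R) (mulr0z 1)).
Qed.

Lemma fc_shift1 (R : realType) (c : R) s : inB s ->
  fc c (tshift 1 s) = fc c s + 2 * (Nspin s)%:~R + 2 - 2 * c.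
Proof.
move=> sB; rewrite /fc.
have h1 := @Dm_shift1 _ s (fun i => i%:~R - c) sB.
have h2 := @Dp_shift1 _ s (fun i => i%:~R - c) sB.
rewrite /= /Dm /Dp in h1 h2; rewrite h1 h2 -/(Dm s) -/(Dp s).
have hs : forall A : set int, finite_set A ->
    \sum_(i \in A) ((i + 1)%:~R - c) = \sum_(i \in A) (i%:~R - c) + \sum_(i \in A) (1:R).
  move=> A Af; rewrite -fsbig_split //; apply: eq_fsbigr => i _.
  by rewrite intrD; change (i%:~R + 1%:~R - c = (i%:~R - c) + 1 :> R); ring.
rewrite (hs _ (Dm_fin _ sB)) (hs _ (Dp_fin _ sB)).
rewrite -(sum1_intr R _ (Dm_fin _ sB)) -(sum1_intr R _ (Dp_fin _ sB)).
rewrite /Nspin /Nminus /Nplus -/(Dm s) -/(Dp s) intrB.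
by case: (s 0); ring.
Qed.

Definition SF {R : realType} (c : R) (n : int) (s : config) :=
  Nspin (tshift n s) = Nspin s + n /\
  fc c (tshift n s) = fc c s + 2 * n%:~R * (Nspin s)%:~R + (n * (n + 1))%:~R - 2 * n%:~R * c.

Lemma shift_facts (R : realType) (c : R) n s : inB s -> SF c n s.
Proof.
move=> sB.
have pos : forall k : nat, SF c k%:Z s.
  elim => [|k [IH1 IH2]]; first by rewrite /SF tshift0; split; [ring|]; rewrite !mulr0z; ring.
  have e : (k.+1)%:Z = 1 + k%:Z by lia.
  have tB := tshiftB k%:Z s sB.
  rewrite /SF e tshiftD Nspin_shift1 // fc_shift1 // IH1 IH2; split; first ring.
  rewrite !(intrD, intrM); ring.
have neg : forall k : nat, SF c (- k%:Z) s.
  elim => [|k [IH1 IH2]]; first by rewrite /SF oppr0 tshift0; split; [ring|]; rewrite !mulr0z; ring.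
  have e : - (k%:Z) = 1 + (- (k.+1)%:Z) by lia.
  have tB := tshiftB (- (k.+1)%:Z) s sB.
  rewrite e tshiftD Nspin_shift1 // fc_shift1 // in IH1 IH2.
  have N1 : Nspin (tshift (- (k.+1)%:Z) s) = Nspin s + - (k.+1)%:Z by lia.
  split => //.
  rewrite N1 in IH2.
  have -> : fc c (tshift (- (k.+1)%:Z) s) =
    fc c s + 2 * (1 + - (k.+1)%:Z)%:~R * (Nspin s)%:~R +
      ((1 + - (k.+1)%:Z) * ((1 + - (k.+1)%:Z) + 1))%:~R - 2 * (1 + - (k.+1)%:Z)%:~R * c
     - (2 * (Nspin s + - (k.+1)%:Z)%:~R + 2 - 2 * c).
    rewrite -IH2; ring.
  rewrite !(intrD, intrM, intrN); ring.
case: n => k; first exact: pos.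
rewrite NegzE; exact: neg.
Qed.

Lemma HJ_shift (R : realType) (J : int -> R) n s : inB s ->
  HJ J (tshift n s) = HJ J s + HJn n J s.
Proof.
move=> sB; rewrite /HJ /HJn.
rewrite (reindex_fsbig (fun i => i + n) (walls s)); last first.
  split.
  - move=> x; rewrite /walls /tshift /= addrK.
    by have -> : x + n + 1 - n = x + 1 by ring.
  - by move=> x y _ _ /addIr.
  - move=> y; rewrite /walls /tshift /= => h; exists (y - n); last by rewrite subrK.
    by have -> : y - n + 1 = y + 1 - n by ring.
rewrite -fsbig_split; last exact: walls_fin.
by apply: eq_fsbigr => i _; rewrite /=; ring.
Qed.

Lemma esumZ (R : realType) (T : choiceType) (P : set T) (f : T -> R) (r : R) :
  0 < r -> \esum_(i in P) (r * f i)%:E = (r%:E * \esum_(i in P) (f i)%:E)%E.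
Proof.
move=> r0; rewrite /esum -ereal_sup_pZl //; congr ereal_sup.
apply/seteqP; split => y /=.
  move=> [A [Af AP] <-]; exists (\sum_(i \in A) (f i)%:E)%E; first by exists A.
  by rewrite !fsumEFin // -EFinM mulr_fsumr.
move=> [x [A [Af AP] <-] <-]; exists A => //.
by rewrite !fsumEFin // -EFinM mulr_fsumr.
Qed.

Lemma weight_shift (R : realType) (c beta q : R) (J : int -> R) n s :
  0 < q -> inB s -> Nspin s = 0 ->
  weight beta q c J (tshift n s) =
  q `^ (- 2 * n%:~R * c + (n * (n + 1))%:~R) *
    (weight beta q c J s * expR (- beta * HJn n J s)).
Proof.
move=> q0 sB N0; rewrite /weight HJ_shift //.
have [_ ->] := @shift_facts R c n _ sB.
rewrite N0 mulr0z mulr0 addr0.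
have -> : fc c s + (n * (n + 1))%:~R - 2 * n%:~R * c =
   fc c s + (- 2 * n%:~R * c + (n * (n + 1))%:~R) by ring.
rewrite powRD; last by rewrite (gt_eqF q0) implybT.
rewrite mulrDr expRD; ring.
Qed.

Theorem lemma2p6 (R : realType) (c beta q : R) (J : int -> R)
  (hbeta : 0 <= beta) (hq0 : 0 < q) (hq1 : q < 1)
  (hsum : (\esum_(i in [set i : int | (i <= 0)%R])
             EFin ((1 + q `^ (2 * (i%:~R - c)) *
                 (expR (beta * J (i - 1)) /
                  (expR (beta * `|J i|) + q ^+ 2 * expR (beta * `|J (i - 2)|))))^-1)%R
           + \esum_(i in [set i : int | (0 < i)%R])
             EFin ((1 + q `^ (- 2 * (i%:~R - c)) *
                 (expR (beta * J (i - 1)) /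
                  (expR (beta * `|J i|) + q ^- 2 * expR (beta * `|J (i - 2)|))))^-1)%R
           < +oo)%E)
  (n : int) :
  mu beta q c J (fun s => (Nspin s == n)%:R)
  = q `^ (- 2 * n%:~R * c + (n * (n + 1))%:~R)
    * mu beta q c J (fun s => (Nspin s == 0)%:R * expR (- beta * HJn n J s)).
Proof.
set D := - 2 * n%:~R * c + (n * (n + 1))%:~R.
have D0 : 0 < q `^ D by apply: powR_gt0.
have E1 : \esum_(s in inB) (weight beta q c J s * (Nspin s == n)%:R)%:E =
    \esum_(s in inB `&` [set s | Nspin s = n]) (weight beta q c J s)%:E.
  rewrite esum_mkcondr; apply: eq_esum => s _.
  case: ifPn => [/set_mem /= -> | hn]; first by rewrite eqxx mulr1.
  have : Nspin s != n by apply/eqP => e; move/negP: hn; apply; exact: mem_set.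
  by move/negbTE => ->; rewrite mulr0.
have E2 : \esum_(s in inB) (weight beta q c J s * ((Nspin s == 0)%:R * expR (- beta * HJn n J s)))%:E =
    \esum_(s in inB `&` [set s | Nspin s = 0]) (weight beta q c J s * expR (- beta * HJn n J s))%:E.
  rewrite esum_mkcondr; apply: eq_esum => s _.
  case: ifPn => [/set_mem /= -> | hn]; first by rewrite eqxx mul1r.
  have : Nspin s != 0 by apply/eqP => e; move/negP: hn; apply; exact: mem_set.
  by move/negbTE => ->; rewrite mul0r mulr0.
have E3 : \esum_(s in inB `&` [set s | Nspin s = n]) (weight beta q c J s)%:E =
   mule ((q `^ D)%:E) (\esum_(s in inB `&` [set s | Nspin s = 0]) (weight beta q c J s * expR (- beta * HJn n J s))%:E).
  rewrite (@reindex_esum _ _ _ (inB `&` [set s | Nspin s = 0]) _ (tshift n)); last first.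
    split.
    - move=> s [sB /= N0]; split; first exact: tshiftB.
      by have [-> _] := @shift_facts R c n _ sB; rewrite /= N0 add0r.
    - move=> x y _ _ h; apply/funext => i.
      have := congr1 (fun f => f (i + n)) h; by rewrite /tshift /= addrK.
    - move=> y [yB /= Ny]; exists (tshift (- n) y).
        split; first exact: tshiftB.
        by have [-> _] := @shift_facts R c (- n) _ yB; rewrite /= Ny subrr.
      by rewrite -tshiftD subrr tshift0.
  rewrite -esumZ //; apply: eq_esum => s [sB /= N0].
  by rewrite weight_shift.
rewrite /mu E1 E2 E3 mulrA; congr (_ / _).
set X := (\esum_(_ in _) _)%E.
case: X => [r| |] /=; first by [].
  by rewrite mulry gtr0_sg // mul1e /= mulr0.
by rewrite mulrNy gtr0_sg // mul1e /= mulr0.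
Qed.
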